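(* Let $\mathcal G$ be a finite connected groupoid and $\alpha=(S_g,\alpha_g)_{g\in\mathcal G}$ a unital group-type partial action of $\mathcal G$ on a commutative ring $S=\bigoplus_{y\in\mathcal G_0}S_y$, with $S_g=S1_g$ and $1_g\neq0$ for all $g$. Let $\mathcal H\in\mathrm{wSub}_\alpha(\mathcal G)$, with connected components $\mathcal H_1,\dots,\mathcal H_r$ having object sets $Y_1,\dots,Y_r$, and choose $y_j\in Y_j$. Let $T=S^{\alpha_{\mathcal H}}$, $R=S^{\alpha_{\mathcal G}}$, $T_{y_j}=S_{y_j}^{\alpha_{\mathcal H_j(y_j)}}$ and $R_{y_j}=S_{y_j}^{\alpha_{\mathcal G(y_j)}}$. Then $R\subseteq T$ is separable if and only if $R_{y_j}\subseteq T_{y_j}$ is separable for all $1\le j\le r$.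
   Context: A groupoid is a small category with all morphisms invertible; $\mathcal G_0$ is its object set (identified with identity morphisms), $s(g),t(g)$ source and target, $\mathcal G(x,y)=\{g:s(g)=x,t(g)=y\}$, $\mathcal G(x)=\mathcal G(x,x)$; $gh$ defined iff $s(g)=t(h)$; connected means all $\mathcal G(x,y)\ne\emptyset$; connected components are full subgroupoids on classes of $x\sim y\iff\mathcal G(x,y)\ne\emptyset$; wide means containing all objects. A partial action $\alpha=(S_g,\alpha_g)_{g\in\mathcal G}$ on a ring $S$: for each $g$, $S_{t(g)}$ is an ideal of $S$, $S_g$ an ideal of $S_{t(g)}$, $\alpha_g:S_{g^{-1}}\to S_g$ a ring isomorphism; $\alpha_x=\mathrm{id}_{S_x}$; for composable $(g,h)$, $\alpha_h^{-1}(S_{g^{-1}}\cap S_h)\subseteq S_{(gh)^{-1}}$ and $\alpha_g\alpha_h(a)=\alpha_{gh}(a)$ there. Unital: $S_g=S1_g$, $1_g$ central idempotent. A partial action of a connected groupoid $\mathcal K$ on $A=\bigoplus_{y\in\mathcal K_0}A_y$ is group-type if there are $x\in\mathcal K_0$ and $\tau_y\in\mathcal K(x,y)$ ($\tau_x=x$) with $A_{\tau_y^{-1}}=A_x$, $A_{\tau_y}=A_y$ for all $y$; for non-connected $\mathcal K$ it is group-type if each restriction to a connected component $\mathcal K_Y$ (acting on $\bigoplus_{y\in Y}A_y$) is group-type. For a subgroupoid $\mathcal H$, $\alpha_{\mathcal H}=(S_h,\alpha_h)_{h\in\mathcal H}$ acts on $\bigoplus_{z\in\mathcal H_0}S_z$;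 $\mathrm{wSub}_\alpha(\mathcal G)$ is the set of wide subgroupoids $\mathcal H$ with $\alpha_{\mathcal H}$ group-type. For a subgroupoid $\mathcal K$ and subring $A\subseteq S$, $A^{\alpha_{\mathcal K}}=\{a\in A:\alpha_k(a1_{k^{-1}})=a1_k\ \forall k\in\mathcal K\}$. A unital ring extension $B\subseteq C$ is separable if the multiplication $C\otimes_BC\to C$ splits as a map of $C$-bimodules, equivalently there is $e\in C\otimes_BC$ with $ce=ec$ for all $c\in C$ and $m(e)=1_C$. *)

(* Defs.v *)
From HB Require Import structures.
From mathcomp Require Import all_boot all_order all_algebra.
Set Implicit Arguments. Unset Strict Implicit. Unset Printing Implicit Defensive.
Import GRing.Theory.
Local Open Scope ring_scope.

(** * Finite groupoids.  Objects form a finType; [gd_id x] is the identity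
    morphism at [x]; [gd_mul g h] is the composite gh (meaningful when
    [gd_s g = gd_t h]). *)
Record groupoid := Groupoid {
  gd_mor : finType;
  gd_obj : finType;
  gd_s : gd_mor -> gd_obj;
  gd_t : gd_mor -> gd_obj;
  gd_id : gd_obj -> gd_mor;
  gd_mul : gd_mor -> gd_mor -> gd_mor;
  gd_inv : gd_mor -> gd_mor;
  gd_s_id : forall x, gd_s (gd_id x) = x;
  gd_t_id : forall x, gd_t (gd_id x) = x;
  gd_s_mul : forall g h, gd_s g = gd_t h -> gd_s (gd_mul g h) = gd_s h;
  gd_t_mul : forall g h, gd_s g = gd_t h -> gd_t (gd_mul g h) = gd_t g;
  gd_mulA : forall g h k, gd_s g = gd_t h -> gd_s h = gd_t k ->
      gd_mul (gd_mul g h) k = gd_mul g (gd_mul h k);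
  gd_mul1g : forall g, gd_mul (gd_id (gd_t g)) g = g;
  gd_mulg1 : forall g, gd_mul g (gd_id (gd_s g)) = g;
  gd_s_inv : forall g, gd_s (gd_inv g) = gd_t g;
  gd_t_inv : forall g, gd_t (gd_inv g) = gd_s g;
  gd_mulVg : forall g, gd_mul (gd_inv g) g = gd_id (gd_s g);
  gd_mulgV : forall g, gd_mul g (gd_inv g) = gd_id (gd_t g)
}.

Section Groupoids.
Variable G : groupoid.
Local Notation M := (gd_mor G).
Local Notation O := (gd_obj G).

Definition gd_connected : Prop :=
  forall x y : O, exists g : M, gd_s g = x /\ gd_t g = y.

Definition is_subgroupoid (H : {set M}) : Prop :=
  (forall g h, g \in H -> h \in H -> gd_s g = gd_t h -> gd_mul g h \in H) /\
  (forall g, g \in H -> gd_inv g \in H) /\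
  (forall g, g \in H -> gd_id (gd_s g) \in H /\ gd_id (gd_t g) \in H).

Definition is_wide (H : {set M}) : Prop := forall x : O, gd_id x \in H.

Definition H_conn (H : {set M}) (x y : O) : Prop :=
  exists h, h \in H /\ gd_s h = x /\ gd_t h = y.

End Groupoids.

Section PartialActions.
Variables (G : groupoid) (S : comPzRingType).
Local Notation M := (gd_mor G).
Local Notation O := (gd_obj G).

(** Membership in the ideal S*f generated by an idempotent f. *)
Definition in_ideal (f a : S) : Prop := a * f = a.

Definition same_ideal (f f' : S) : Prop := forall a, in_ideal f a <-> in_ideal f' a.

(** Unital partial action alpha = (S_g, alpha_g) with S_g = S 1_g, where
    [e g] = 1_g and [alpha g] is alpha_g : S_{g^-1} -> S_g (its values outside
    S_{g^-1} are irrelevant), on S = (+)_{y in G_0} S_y with S_y = S_{id_y}. *)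
Definition unital_partial_action (e : M -> S) (alpha : M -> S -> S) : Prop :=
  (* S = direct sum of the ideals S_y *)
      (forall x y : O, x != y -> e (gd_id x) * e (gd_id y) = 0) /\
      \sum_(y : O) e (gd_id y) = 1 /\
      (* 1_g central idempotent, S_g ideal of S_{t(g)} *)
      (forall g, e g * e g = e g) /\
      (forall g, in_ideal (e (gd_id (gd_t g))) (e g)) /\
      (* alpha_g : S_{g^-1} -> S_g is a ring isomorphism *)
      (forall g a, in_ideal (e (gd_inv g)) a -> in_ideal (e g) (alpha g a)) /\
      (forall g a b, in_ideal (e (gd_inv g)) a -> in_ideal (e (gd_inv g)) b ->
          alpha g (a + b) = alpha g a + alpha g b /\
          alpha g (a * b) = alpha g a * alpha g b) /\
      (forall g a b, in_ideal (e (gd_inv g)) a -> in_ideal (e (gd_inv g)) b ->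
          alpha g a = alpha g b -> a = b) /\
      (forall g c, in_ideal (e g) c -> exists2 a, in_ideal (e (gd_inv g)) a & alpha g a = c) /\
      (forall x a, in_ideal (e (gd_id x)) a -> alpha (gd_id x) a = a) /\
      (forall g h a, gd_s g = gd_t h -> in_ideal (e (gd_inv h)) a ->
          in_ideal (e (gd_inv g)) (alpha h a) ->
          in_ideal (e (gd_inv (gd_mul g h))) a /\
          alpha g (alpha h a) = alpha (gd_mul g h) a).

Definition group_type_component (e : M -> S) (K : {set M}) (x0 : O) : Prop :=
  exists x : O, exists tau : O -> M,
    H_conn K x x0 /\ tau x = gd_id x /\
    forall y, H_conn K y x0 ->
      [/\ tau y \in K, gd_s (tau y) = x, gd_t (tau y) = y,
          same_ideal (e (gd_inv (tau y))) (e (gd_id x)) &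
          same_ideal (e (tau y)) (e (gd_id y))].

Definition group_type (e : M -> S) (K : {set M}) : Prop :=
  forall x0 : O, group_type_component e K x0.

Definition wSub (e : M -> S) (H : {set M}) : Prop :=
  [/\ is_subgroupoid H, is_wide H & group_type e H].

Definition invariants (e : M -> S) (alpha : M -> S -> S) (A : S -> Prop)
    (K : {set M}) (a : S) : Prop :=
  A a /\ forall k, k \in K -> alpha k (a * e (gd_inv k)) = a * e k.

Definition isotropy (K : {set M}) (y : O) : {set M} :=
  [set k in K | (gd_s k == y) && (gd_t k == y)].

End PartialActions.

(** * Separable extensions B ⊆ C of subrings of a ring S (given as predicates,
    C having identity [one]).  Equality in C ⊗_B C of two finite sums of simple
    tensors is expressed by the universal property of the tensor product: they
    agree under every B-balanced biadditive map on C × C into an abelian group. *)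
Section Separable.
Variable S : pzRingType.

Definition balanced (B C : S -> Prop) (Mz : zmodType) (f : S -> S -> Mz) : Prop :=
  [/\ (forall a a' c, C a -> C a' -> C c -> f (a + a') c = f a c + f a' c),
      (forall a c c', C a -> C c -> C c' -> f a (c + c') = f a c + f a c') &
      (forall a b c, C a -> B b -> C c -> f (a * b) c = f a (b * c))].

Definition tensor_eq (B C : S -> Prop) (l1 l2 : seq (S * S)) : Prop :=
  forall (Mz : zmodType) (f : S -> S -> Mz), balanced B C f ->
    \sum_(p <- l1) f p.1 p.2 = \sum_(p <- l2) f p.1 p.2.

(** B ⊆ C separable: there is e = sum_i x_i ⊗ y_i in C ⊗_B C with
    c e = e c for all c in C and m(e) = 1_C. *)
Definition separable_ext (B C : S -> Prop) (one : S) : Prop :=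
  exists l : seq (S * S),
    [/\ (forall p, p \in l -> C p.1 /\ C p.2),
        \sum_(p <- l) p.1 * p.2 = one &
        forall c, C c ->
          tensor_eq B C [seq (c * p.1, p.2) | p <- l] [seq (p.1, p.2 * c) | p <- l]].

End Separable.

(* Main.v *)
Require Import Defs.
From mathcomp Require Import all_boot all_order all_algebra.
From Stdlib Require Import IndefiniteDescription.
Set Implicit Arguments. Unset Strict Implicit. Unset Printing Implicit Defensive.
Import GRing.Theory.
Local Open Scope ring_scope.

Section GL.
Variable G : groupoid.
Local Notation s := (@gd_s G).
Local Notation t := (@gd_t G).
Local Notation iv := (@gd_inv G).
Local Notation mu := (@gd_mul G).
Local Notation id1 := (@gd_id G).

Lemma s_inv g : s (iv g) = t g. Proof. exact: gd_s_inv. Qed.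
Lemma t_inv g : t (iv g) = s g. Proof. exact: gd_t_inv. Qed.

Lemma inv_inv g : iv (iv g) = g.
Proof.
have E := @gd_mulA G (iv (iv g)) (iv g) g (s_inv _) (s_inv _).
rewrite gd_mulVg s_inv gd_mul1g gd_mulVg in E.
by rewrite {2}E -[s g]t_inv -s_inv gd_mulg1.
Qed.

Lemma s_mul g h : s g = t h -> s (mu g h) = s h. Proof. exact: gd_s_mul. Qed.
Lemma t_mul g h : s g = t h -> t (mu g h) = t g. Proof. exact: gd_t_mul. Qed.

Lemma mulK_l g h : s g = t h -> mu (iv g) (mu g h) = h.
Proof.
move=> E; rewrite -gd_mulA ?s_inv // gd_mulVg E; exact: gd_mul1g.
Qed.

Lemma mulK_r g h : s g = t h -> mu (mu g h) (iv h) = g.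
Proof.
move=> E; rewrite gd_mulA ?t_inv // gd_mulgV -E; exact: gd_mulg1.
Qed.

Lemma inv_mul g h : s g = t h -> iv (mu g h) = mu (iv h) (iv g).
Proof.
move=> E.
have E2 : s (iv h) = t (iv g) by rewrite s_inv t_inv.
have E1 : s (mu g h) = t (mu (iv h) (iv g)) by rewrite s_mul // t_mul // t_inv.
have E3 : mu (mu g h) (mu (iv h) (iv g)) = id1 (t g).
  rewrite (gd_mulA E); last by rewrite t_mul // t_inv.
  rewrite -(gd_mulA (esym (t_inv h)) E2) gd_mulgV -E -(t_inv g) gd_mul1g; exact: gd_mulgV.
by rewrite -[RHS](mulK_l E1) E3 -(t_mul E) -s_inv gd_mulg1.
Qed.
End GL.

Section PA.
Variables (G : groupoid) (S : comPzRingType).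
Variables (e : gd_mor G -> S) (alpha : gd_mor G -> S -> S).
Hypothesis upa : unital_partial_action e alpha.
Local Notation s := (@gd_s G).
Local Notation t := (@gd_t G).
Local Notation iv := (@gd_inv G).
Local Notation mu := (@gd_mul G).
Local Notation id1 := (@gd_id G).
Local Notation one x := (e (id1 x)).

Lemma orth x y : x != y -> one x * one y = 0.
Proof. by move: upa => [H1 [H2 [H3 [H4 [H5 [H6 [H7 [H8 [H9 H10]]]]]]]]]; apply: H1. Qed.
Lemma sum1 : \sum_y one y = 1.
Proof. by move: upa => [H1 [H2 [H3 [H4 [H5 [H6 [H7 [H8 [H9 H10]]]]]]]]]; apply: H2. Qed.
Lemma idem g : e g * e g = e g.
Proof. by move: upa => [H1 [H2 [H3 [H4 [H5 [H6 [H7 [H8 [H9 H10]]]]]]]]]; apply: H3. Qed.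
Lemma le_t g : e g * one (t g) = e g.
Proof. by move: upa => [H1 [H2 [H3 [H4 [H5 [H6 [H7 [H8 [H9 H10]]]]]]]]]; apply: H4. Qed.
Lemma le_s g : e (iv g) * one (s g) = e (iv g).
Proof. by rewrite -t_inv le_t. Qed.
Lemma aI g a : a * e (iv g) = a -> alpha g a * e g = alpha g a.
Proof. by move: upa => [H1 [H2 [H3 [H4 [H5 [H6 [H7 [H8 [H9 H10]]]]]]]]]; apply: H5. Qed.
Lemma aD g a b : a * e (iv g) = a -> b * e (iv g) = b ->
  alpha g (a + b) = alpha g a + alpha g b.
Proof. move: upa => [H1 [H2 [H3 [H4 [H5 [H6 [H7 [H8 [H9 H10]]]]]]]]] Ha Hb; by case: (H6 g a b Ha Hb). Qed.
Lemma aM g a b : a * e (iv g) = a -> b * e (iv g) = b ->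
  alpha g (a * b) = alpha g a * alpha g b.
Proof. move: upa => [H1 [H2 [H3 [H4 [H5 [H6 [H7 [H8 [H9 H10]]]]]]]]] Ha Hb; by case: (H6 g a b Ha Hb). Qed.
Lemma ainj g a b : a * e (iv g) = a -> b * e (iv g) = b -> alpha g a = alpha g b -> a = b.
Proof. by move: upa => [H1 [H2 [H3 [H4 [H5 [H6 [H7 [H8 [H9 H10]]]]]]]]]; apply: H7. Qed.
Lemma asurj g c : c * e g = c -> exists2 a, a * e (iv g) = a & alpha g a = c.
Proof. by move: upa => [H1 [H2 [H3 [H4 [H5 [H6 [H7 [H8 [H9 H10]]]]]]]]]; apply: H8. Qed.
Lemma aid x a : a * one x = a -> alpha (id1 x) a = a.
Proof. by move: upa => [H1 [H2 [H3 [H4 [H5 [H6 [H7 [H8 [H9 H10]]]]]]]]]; apply: H9. Qed.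
Lemma acomp g h a : s g = t h -> a * e (iv h) = a -> alpha h a * e (iv g) = alpha h a ->
  a * e (iv (mu g h)) = a /\ alpha g (alpha h a) = alpha (mu g h) a.
Proof. by move: upa => [H1 [H2 [H3 [H4 [H5 [H6 [H7 [H8 [H9 H10]]]]]]]]]; apply: H10. Qed.

Lemma a0 g : alpha g 0 = 0.
Proof.
have h := @aD g 0 0 (mul0r _) (mul0r _).
rewrite addr0 in h.
by apply: (@addrI _ (alpha g 0)); rewrite addr0 -h.
Qed.

Lemma D1 g : alpha g (e (iv g)) = e g.
Proof.
have [a Ha Ea] := @asurj g (e g) (idem g).
have := @aM g (e (iv g)) a (idem _) Ha.
by rewrite [e (iv g) * a]mulrC Ha Ea (aI (idem _)).
Qed.

Lemma inI_t g a : a * e g = a -> a * one (t g) = a.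
Proof. by move=> Ha; rewrite -{1}Ha -mulrA le_t Ha. Qed.

Lemma D2 g a : a * e g = a -> alpha g (alpha (iv g) a) = a.
Proof.
move=> Ha.
have Ha' : a * e (iv (iv g)) = a by rewrite inv_inv.
have [_ E] := @acomp g (iv g) a (esym (t_inv g)) Ha' (aI Ha').
by rewrite E gd_mulgV aid // (inI_t Ha).
Qed.

Definition full g := e (iv g) = one (s g) /\ e g = one (t g).

Lemma full_inv g : full g -> full (iv g).
Proof. by case=> h1 h2; split; rewrite ?inv_inv ?s_inv ?t_inv. Qed.

Lemma G3' m g : full g -> s m = t g -> e m * e (mu m g) = e m.
Proof.
move=> [f1 f2] E.
have Hm : e (iv m) * e g = e (iv m) by rewrite f2 -E le_s.
have Hm' : e (iv m) * e (iv (iv g)) = e (iv m) by rewrite inv_inv.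
set a := alpha (iv g) (e (iv m)).
have Ha : a * e (iv g) = a by apply: aI.
have Hga : alpha g a = e (iv m) by apply: D2.
have Hb : alpha g a * e (iv m) = alpha g a by rewrite Hga idem.
have [E1 E2] := @acomp m g a E Ha Hb.
rewrite Hga D1 in E2.
by rewrite E2 aI.
Qed.

Lemma G3 m g : full g -> s m = t g -> e (mu m g) = e m.
Proof.
move=> fg E.
have h1 := G3' fg E.
have E' : s (mu m g) = t (iv g) by rewrite s_mul // t_inv.
have h2 := G3' (full_inv fg) E'.
rewrite mulK_r // in h2.
by rewrite -h2 mulrC h1.
Qed.

Lemma G1 g m : full g -> s g = t m -> e (mu g m) = alpha g (e m).
Proof.
move=> fg E.
have Ei : s (iv m) = t (iv g) by rewrite s_inv t_inv E.
rewrite -D1 inv_mul // (G3 (full_inv fg) Ei).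
have H1 : alpha m (e (iv m)) * e (iv g) = alpha m (e (iv m)).
  by rewrite D1 (proj1 fg) E le_t.
have [_ E2] := @acomp g m (e (iv m)) E (idem _) H1.
by rewrite -E2 D1.
Qed.

Lemma ext a b : (forall w, a * one w = b * one w) -> a = b.
Proof.
move=> h; rewrite -(mulr1 a) -(mulr1 b) -sum1 !mulr_sumr.
by apply: eq_bigr => w _; apply: h.
Qed.

Lemma mul3 a b w : one w * one w = one w -> a * b * one w = (a * one w) * (b * one w).
Proof. move=> h; by rewrite mulrACA h. Qed.

Definition hcb (K : {set gd_mor G}) z x : bool :=
  [exists h, [&& h \in K, s h == z & t h == x]].

Lemma hcbP K z x : reflect (H_conn K z x) (hcb K z x).
Proof.
apply: (iffP existsP) => [[h /and3P [hK /eqP hs /eqP ht]]|[h [hK [hs ht]]]].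
  by exists h.
by exists h; rewrite hK hs ht !eqxx.
Qed.

Lemma same_eq (f f' : S) : f * f = f -> f' * f' = f' -> same_ideal f f' -> f = f'.
Proof.
move=> h1 h2 h.
have e1 : f * f' = f by apply/(h f).1.
have e2 : f' * f = f' by apply/(h f').2.
by rewrite -e1 mulrC e2.
Qed.

Section Ext.
Variable K : {set gd_mor G}.
Hypothesis Ksub : is_subgroupoid K.
Variable x : gd_obj G.
Variable tau : gd_obj G -> gd_mor G.
Hypothesis taux : tau x = id1 x.
Hypothesis hxx : hcb K x x.
Hypothesis htau : forall z, hcb K z x ->
  [/\ tau z \in K, s (tau z) = x, t (tau z) = z & full (tau z)].

Definition Cs : {set gd_obj G} := [set z | hcb K z x].
Definition L (b : S) : S := \sum_(z in Cs) alpha (tau z) (b * one x).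


Lemma bz b z : hcb K z x -> (b * one x) * e (iv (tau z)) = b * one x.
Proof. case/htau => _ hs _ [f1 _]; by rewrite f1 hs -mulrA idem. Qed.

Lemma Tz b z : hcb K z x -> alpha (tau z) (b * one x) * one z = alpha (tau z) (b * one x).
Proof.
move=> hz; have := aI (bz b hz); case/htau: hz => _ _ ht [_ f2]; by rewrite f2 ht.
Qed.

Lemma Lw b w : L b * one w = if w \in Cs then alpha (tau w) (b * one x) else 0.
Proof.
rewrite /L mulr_suml.
have F : forall z, z \in Cs -> alpha (tau z) (b * one x) * one w =
    if z == w then alpha (tau z) (b * one x) else 0.
  move=> z; rewrite inE => hz; rewrite -(Tz b hz) -mulrA.
  case: eqP => [->|/eqP nzw]; first by rewrite idem.
  by rewrite orth // mulr0.
case: ifP => hw.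
  rewrite (bigD1 w) //= big1 ?addr0; first by rewrite F // eqxx.
  by move=> z /andP [hz nzw]; rewrite F // (negbTE nzw).
rewrite big1 // => z hz; rewrite F //; case: eqP => // ezw; by rewrite ezw hw in hz.
Qed.

Lemma LD a b : L (a + b) = L a + L b.
Proof.
apply: ext => w; rewrite mulrDl !Lw; case: ifP => hw; last by rewrite addr0.
rewrite inE in hw; by rewrite mulrDl aD // bz.
Qed.

Lemma L0 : L 0 = 0.
Proof. apply: ext => w; rewrite Lw !mul0r; case: ifP => // _; by rewrite a0. Qed.

Lemma Lsum (I : Type) (l : seq I) (F : I -> S) :
  L (\sum_(p <- l) F p) = \sum_(p <- l) L (F p).
Proof. elim: l => [|a l IH]; by rewrite ?big_nil ?L0 // !big_cons LD IH. Qed.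

Lemma LM a b : L (a * b) = L a * L b.
Proof.
apply: ext => w; rewrite mul3 ?idem // !Lw; case: ifP => hw; last by rewrite mul0r.
rewrite inE in hw; by rewrite -aM ?bz // mul3 // idem.
Qed.

Lemma Lx b : L b * one x = b * one x.
Proof. by rewrite Lw inE hxx taux aid // -mulrA idem. Qed.

Lemma L1w w : L (one x) * one w = if w \in Cs then one w else 0.
Proof.
rewrite Lw; case: ifP => // hw; rewrite idem.
rewrite inE in hw; case/htau: (hw) => _ hs ht [f1 f2].
by rewrite -hs -f1 D1 f2 ht.
Qed.


Lemma KM g h : g \in K -> h \in K -> s g = t h -> mu g h \in K.
Proof. by case: Ksub => H _; apply: H. Qed.
Lemma KI g : g \in K -> iv g \in K.
Proof. by case: Ksub => _ [H _]; apply: H. Qed.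

Lemma hcb_k k : k \in K -> hcb K (s k) x = hcb K (t k) x.
Proof.
move=> hk; apply/idP/idP => /hcbP [h [hK [hs ht]]]; apply/hcbP.
  have E : s h = t (iv k) by rewrite t_inv.
  exists (mu h (iv k)); split; first by apply: KM => //; apply: KI.
  by rewrite s_mul // t_mul // s_inv.
have E : s h = t k by [].
exists (mu h k); split; first by apply: KM.
by rewrite s_mul // t_mul.
Qed.

Lemma LinvM A a b : invariants e alpha A K a -> a * L b = L (a * b).
Proof.
case=> _ ha; apply: ext => w; rewrite -mulrA !Lw; case: ifP => hw; last by rewrite mulr0.
rewrite inE in hw; case/htau: (hw) => hK hs ht [f1 f2].
have -> : a * b * one x = (a * one x) * (b * one x) by rewrite mul3 // idem.
rewrite (@aM _ (a * one x)) ?bz //.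
have := ha _ hK; rewrite f1 f2 hs ht => ->.
by rewrite -mulrA [one w * _]mulrC Tz.
Qed.

Lemma Linv b : b * one x = b ->
  (forall h, h \in K -> s h = x -> t h = x -> alpha h (b * e (iv h)) = b * e h) ->
  forall k, k \in K -> alpha k (L b * e (iv k)) = L b * e k.
Proof.
move=> hb binv k hk.
have -> : L b * e (iv k) = L b * one (s k) * e (iv k) by rewrite -mulrA [one _ * _]mulrC le_s.
have -> : L b * e k = L b * one (t k) * e k by rewrite -mulrA [one _ * _]mulrC le_t.
rewrite !Lw !inE -(hcb_k hk).
case: ifP => hc; last by rewrite !mul0r a0.
have hc2 : hcb K (t k) x by rewrite -(hcb_k hk).
case/htau: (hc) => hK1 hs1 ht1 fu1.
case/htau: (hc2) => hK2 hs2 ht2 fu2.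
rewrite hb.
set t1 := tau (s k) in hK1 hs1 ht1 fu1 *.
set t2 := tau (t k) in hK2 hs2 ht2 fu2 *.
have Ek1 : s k = t t1 by [].
have Ek2 : s (iv t2) = t (mu k t1) by rewrite s_inv t_mul.
set h := mu (iv t2) (mu k t1).
have hK : h \in K by apply: KM; [apply: KI | apply: KM |].
have hsx : s h = x by rewrite s_mul // s_mul.
have htx : t h = x by rewrite t_mul // t_inv.
have eh : e h = alpha (iv t2) (e k).
  by rewrite /h (G1 (full_inv fu2)) // (G3 fu1).
have Eh1 : s (mu (iv t1) (iv k)) = t t2.
  rewrite s_mul; first by rewrite s_inv ht2.
  by rewrite s_inv t_inv.
have ehi : e (iv h) = alpha (iv t1) (e (iv k)).
  rewrite /h inv_mul // inv_mul // inv_inv (G3 fu2 Eh1) (G1 (full_inv fu1)) //.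
  by rewrite s_inv t_inv.
set c := e (iv h).
have bt1 : b * e (iv t1) = b by rewrite (proj1 fu1) hs1.
have bt2 : b * e (iv t2) = b by rewrite (proj1 fu2) hs2.
have ct1 : c * e (iv t1) = c by rewrite (proj1 fu1) hs1 -hsx le_s.
have SA : alpha t1 b * e (iv k) = alpha t1 (b * c).
  rewrite aM // /c ehi D2 //.
  by rewrite (proj2 fu1) ht1 le_s.
have bc1 : b * c * e (iv t1) = b * c by rewrite -mulrA ct1.
have bc2 : alpha t1 (b * c) * e (iv k) = alpha t1 (b * c) by rewrite -SA -mulrA idem.
rewrite SA (proj2 (acomp Ek1 bc1 bc2)).
have EC : mu k t1 = mu t2 h by rewrite /h -{1}(inv_inv t2) mulK_l.
have Eth : s t2 = t h by rewrite hs2 htx.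
have bch : b * c * e (iv h) = b * c by rewrite -mulrA idem.
have bch2 : alpha h (b * c) * e (iv t2) = alpha h (b * c).
  by rewrite (proj1 fu2) hs2 -htx; apply: inI_t; apply: aI.
rewrite EC -(proj2 (acomp Eth bch bch2)) binv //.
rewrite aM //; last by rewrite (proj1 fu2) hs2 -htx le_t.
rewrite eh D2 //.
by rewrite (proj2 fu2) ht2 le_t.
Qed.

Lemma Lproj b : L (b * one x) = L b.
Proof. by rewrite /L; apply: eq_bigr => z _; rewrite -mulrA idem. Qed.
End Ext.

Lemma restrict K A y a : invariants e alpha A K a ->
  invariants e alpha (in_ideal (one y)) (isotropy K y) (a * one y).
Proof.
case=> _ ha; split; first by rewrite /in_ideal -mulrA idem.
move=> k; rewrite inE => /and3P [hk /eqP hs /eqP ht].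
rewrite -!mulrA [one y * e (iv k)]mulrC [one y * e k]mulrC -{1}hs -{1}ht le_s le_t.
exact: ha.
Qed.

Lemma hcb_id (K : {set gd_mor G}) y : id1 y \in K -> hcb K y y.
Proof. by move=> h; apply/hcbP; exists (id1 y); rewrite gd_s_id gd_t_id. Qed.

Lemma full_of (K : {set gd_mor G}) x0 x (tau : gd_obj G -> gd_mor G) z :
  (forall y, H_conn K y x0 -> [/\ tau y \in K, s (tau y) = x, t (tau y) = y,
          same_ideal (e (iv (tau y))) (one x) & same_ideal (e (tau y)) (one y)]) ->
  H_conn K z x0 -> [/\ tau z \in K, s (tau z) = x, t (tau z) = z & full (tau z)].
Proof.
move=> H hz; case: (H z hz) => h1 h2 h3 h4 h5; split => //; split.
  by rewrite h2; apply: same_eq => //; apply: idem.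
by rewrite h3; apply: same_eq => //; apply: idem.
Qed.

Lemma rebase (K : {set gd_mor G}) y : is_subgroupoid K -> id1 y \in K -> group_type_component e K y ->
  exists tau : gd_obj G -> gd_mor G, tau y = id1 y /\ forall z, hcb K z y ->
    [/\ tau z \in K, s (tau z) = y, t (tau z) = z & full (tau z)].
Proof.
move=> Ks hy [x [tau0 [_ [_ H]]]].
have Hy : H_conn K y y by apply/hcbP/hcb_id.
case: (full_of H Hy) => hyK hys hyt fy.
have KM' : forall g h, g \in K -> h \in K -> s g = t h -> mu g h \in K.
  by case: Ks.
have KI' : forall g, g \in K -> iv g \in K by case: Ks => _ [].
exists (fun z => mu (tau0 z) (iv (tau0 y))); split.
  by rewrite gd_mulgV hyt.
move=> z /hcbP hz; case: (full_of H hz) => hzK hzs hzt fz.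
have E : s (tau0 z) = t (iv (tau0 y)) by rewrite t_inv hzs hys.
split.
- by apply: KM' => //; apply: KI'.
- by rewrite s_mul // s_inv.
- by rewrite t_mul.
split; last by rewrite (G3 (full_inv fy)) // t_mul // (proj2 fz).
rewrite inv_mul // inv_inv (G3 (full_inv fz)); last by rewrite t_inv hzs hys.
by rewrite (proj2 fy) s_mul // s_inv hyt.
Qed.

Lemma subT : is_subgroupoid [set: gd_mor G].
Proof. by split; [|split] => *; rewrite ?inE. Qed.

Lemma lift K y tau b : is_subgroupoid K -> tau y = id1 y -> hcb K y y ->
  (forall z, hcb K z y -> [/\ tau z \in K, s (tau z) = y, t (tau z) = z & full (tau z)]) ->
  invariants e alpha (in_ideal (one y)) (isotropy K y) b ->
  invariants e alpha (fun _ => True) K (L K y tau b) /\ L K y tau b * one y = b.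
Proof.
move=> Ks ty hyy htau [hb hinv]; split; last by rewrite Lx.
split => //; apply: Linv => // h hK hs ht; apply: hinv.
by rewrite inE hK hs ht !eqxx.
Qed.

Lemma invT A (K : {set gd_mor G}) a : invariants e alpha A [set: gd_mor G] a ->
  invariants e alpha (fun _ => True) K a.
Proof. by case=> _ h; split => // k _; apply: h; rewrite inE. Qed.

Lemma choice_fun (A B : Type) (P : A -> B -> Prop) :
  (forall a, exists b, P a b) -> exists f, forall a, P a (f a).
Proof.
move=> h; exists (fun a => proj1_sig (constructive_indefinite_description _ (h a))).
by move=> a; exact: proj2_sig.
Qed.

Lemma main (H : {set gd_mor G}) (Yrep : {set gd_obj G}) :
  group_type e [set: gd_mor G] -> wSub e H ->
  (forall x, exists y, y \in Yrep /\ H_conn H x y) ->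
  (forall y1 y2, y1 \in Yrep -> y2 \in Yrep -> H_conn H y1 y2 -> y1 = y2) ->
  separable_ext (invariants e alpha (fun _ => True) [set: gd_mor G])
                (invariants e alpha (fun _ => True) H) 1 <->
  (forall y, y \in Yrep -> separable_ext
      (invariants e alpha (in_ideal (one y)) (isotropy [set: gd_mor G] y))
      (invariants e alpha (in_ideal (one y)) (isotropy H y)) (one y)).
Proof.
move=> hG [Hs Hw HgT] hY1 hY2.
have dataH : forall y, exists tau : gd_obj G -> gd_mor G, tau y = id1 y /\ forall z, hcb H z y ->
    [/\ tau z \in H, s (tau z) = y, t (tau z) = z & full (tau z)].
  by move=> y; apply: rebase => //; apply: Hw.
have dataG : forall y, exists tau : gd_obj G -> gd_mor G, tau y = id1 y /\ forall z, hcb [set: gd_mor G] z y ->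
    [/\ tau z \in [set: gd_mor G], s (tau z) = y, t (tau z) = z & full (tau z)].
  by move=> y; apply: rebase => //; rewrite ?inE //; apply: subT.
have [tH htH] := choice_fun dataH.
have [tG htG] := choice_fun dataG.
split.
- move=> [l [hl hsum hten]] y hy.
  case: (htH y) => ty hty.
  have hyy : hcb H y y by apply: hcb_id; apply: Hw.
  exists [seq (p.1 * one y, p.2 * one y) | p <- l]; split.
  + move=> p /mapP [q hq ->] /=; case: (hl q hq) => h1 h2; split; [exact: (restrict y h1) | exact: (restrict y h2)].
  + rewrite big_map /= -{3}(mul1r (one y)) -hsum mulr_suml.
    by apply: eq_bigr => p _; rewrite mul3 // idem.
  + move=> c hc Mz f [hfa hfb hfm].
    have [hc1 hc2] := lift Hs ty hyy hty hc.
    set c' := L H y (tH y) c in hc1 hc2.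
    pose f' := fun a b => f (a * one y) (b * one y).
    have rT := fun a (h : invariants e alpha (fun _ => True) H a) => restrict y h.
    have rR := fun a (h : invariants e alpha (fun _ => True) [set: gd_mor G] a) => restrict y h.
    have hf' : balanced (invariants e alpha (fun _ => True) [set: gd_mor G])
                (invariants e alpha (fun _ => True) H) f'.
      split.
      * by move=> a a' b ha ha' hb; rewrite /f' mulrDl hfa //; apply: rT.
      * by move=> a b b' ha hb hb'; rewrite /f' mulrDl hfb //; apply: rT.
      * move=> a r b ha hr hb; rewrite /f' mul3 ?idem // hfm; try apply: rT => //; try apply: rR => //.
        by rewrite -mul3 ?idem.
    have := hten c' hc1 Mz f' hf'.
    rewrite !big_map /f' /= => E.
    transitivity (\sum_(p <- l) f (c' * p.1 * one y) (p.2 * one y)).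
      by apply: eq_bigr => p _; rewrite -hc2 -mul3 ?idem // mulrAC.
    rewrite E; apply: eq_bigr => p _; rewrite -hc2 -mul3 ?idem //.
- move=> hsep.
  have dataL : forall y, exists l : seq (S * S), y \in Yrep ->
    [/\ (forall p, p \in l -> invariants e alpha (in_ideal (one y)) (isotropy H y) p.1 /\
                              invariants e alpha (in_ideal (one y)) (isotropy H y) p.2),
        \sum_(p <- l) p.1 * p.2 = one y &
        forall c, invariants e alpha (in_ideal (one y)) (isotropy H y) c ->
          tensor_eq (invariants e alpha (in_ideal (one y)) (isotropy [set: gd_mor G] y))
                    (invariants e alpha (in_ideal (one y)) (isotropy H y))
                    [seq (c * p.1, p.2) | p <- l] [seq (p.1, p.2 * c) | p <- l]].
    move=> y; case: (boolP (y \in Yrep)) => hy; last by exists [::].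
    by case: (hsep y hy) => l hl; exists l.
  have [ls hls] := choice_fun dataL.
  pose LH y := L H y (tH y).
  pose LG y := L [set: gd_mor G] y (tG y).
  have liftH : forall y b, invariants e alpha (in_ideal (one y)) (isotropy H y) b ->
      invariants e alpha (fun _ => True) H (LH y b) /\ LH y b * one y = b.
    move=> y b hb; case: (htH y) => t1 t2; apply: (lift Hs t1 _ t2 hb).
    by apply: hcb_id; apply: Hw.
  have liftG : forall y b, invariants e alpha (in_ideal (one y)) (isotropy [set: gd_mor G] y) b ->
      invariants e alpha (fun _ => True) [set: gd_mor G] (LG y b) /\ LG y b * one y = b.
    move=> y b hb; case: (htG y) => t1 t2; apply: (lift subT t1 _ t2 hb).
    by apply: hcb_id; rewrite inE.
  exists [seq (LH y p.1, LH y p.2) | y <- enum Yrep, p <- ls y]; split.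
  + move=> q /allpairsPdep [y [p [hy hp ->]]] /=.
    rewrite mem_enum in hy; case: (hls y hy) => hl _ _; case: (hl p hp) => h1 h2.
    by split; [exact: (liftH y _ h1).1 | exact: (liftH y _ h2).1].
  + rewrite big_allpairs_dep /=.
    transitivity (\sum_(y <- enum Yrep) LH y (one y)).
      rewrite big_seq [RHS]big_seq; apply: eq_bigr => y; rewrite mem_enum => hy.
      case: (hls y hy) => _ hs _; rewrite -hs /LH (Lsum (htH y).2).
      by apply: eq_bigr => p _; rewrite (LM (htH y).2).
    rewrite big_enum /=; apply: ext => w; rewrite mulr_suml mul1r.
    under eq_bigr => y _ do rewrite /LH (L1w (htH y).2).
    case: (hY1 w) => y0 [hy0 hc0].
    rewrite (bigD1 y0) //=.
    have -> : w \in Cs H y0 by rewrite inE; apply/hcbP.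
    rewrite big1 ?addr0 // => y /andP [hy ny]; rewrite inE; case: hcbP => // hc.
    exfalso; move/negP: ny; apply; apply/eqP; apply: hY2 => //.
    case: hc => h1 [hh1 [hs1 ht1]]; case: hc0 => h2 [hh2 [hs2 ht2]].
    have E : s h2 = t (iv h1) by rewrite t_inv hs1 hs2.
    exists (mu h2 (iv h1)); split; first by case: Hs => HM [HI _]; apply: HM => //; apply: HI.
    by rewrite s_mul // s_inv t_mul.
  + move=> c hc Mz f [hfa hfb hfm].
    rewrite !big_map !big_allpairs_dep /=.
    rewrite big_seq [RHS]big_seq; apply: eq_bigr => y; rewrite mem_enum => hy /=.
    case: (hls y hy) => hl _ hten.
    have hcy := restrict y hc.
    pose fy := fun a b => f (LH y a) (LH y b).
    have TL : forall b, invariants e alpha (in_ideal (one y)) (isotropy H y) b ->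
        invariants e alpha (fun _ => True) H (LH y b) := fun b h => (liftH y b h).1.
    have hfy : balanced (invariants e alpha (in_ideal (one y)) (isotropy [set: gd_mor G] y))
                        (invariants e alpha (in_ideal (one y)) (isotropy H y)) fy.
      split.
      * by move=> a a' b ha ha' hb; rewrite /fy /LH (LD (htH y).2) hfa //; apply: TL.
      * by move=> a b b' ha hb hb'; rewrite /fy /LH (LD (htH y).2) hfb //; apply: TL.
      * move=> a r b ha hr hb; rewrite /fy.
        have hLG := invT H (liftG y r hr).1.
        have E1 : LH y (a * r) = LH y a * LG y r.
          rewrite [RHS]mulrC /LH (LinvM (htH y).2 _ hLG) -[RHS]Lproj mulrAC (liftG y r hr).2.
          by rewrite [r * a]mulrC.
        have E2 : LH y (r * b) = LG y r * LH y b.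
          by rewrite /LH (LinvM (htH y).2 _ hLG) -[RHS]Lproj mulrAC (liftG y r hr).2.
        rewrite E1 E2 hfm //; [exact: TL | exact: (liftG y r hr).1 | exact: TL].
    have := hten _ hcy Mz fy hfy; rewrite !big_map /fy /= => E.
    transitivity (\sum_(p <- ls y) f (LH y (c * one y * p.1)) (LH y p.2)).
      apply: eq_bigr => p _; congr (f _ _).
      by rewrite /LH (LinvM (htH y).2 _ hc) mulrAC Lproj.
    rewrite E; apply: eq_bigr => p _; congr (f _ _).
    rewrite [RHS]mulrC /LH (LinvM (htH y).2 _ hc).
    by rewrite mulrA [p.2 * c]mulrC Lproj.
Qed.
End PA.

Theorem lemma5p2 (G : groupoid) (S : comPzRingType)
    (e : gd_mor G -> S) (alpha : gd_mor G -> S -> S)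
    (H : {set gd_mor G}) (Yrep : {set gd_obj G}) :
  gd_connected G ->
  unital_partial_action e alpha ->
  group_type e [set: gd_mor G] ->
  (forall g, e g != 0) ->
  wSub e H ->
  (* Yrep contains exactly one object y_j of each connected component of H *)
  (forall x, exists y, y \in Yrep /\ H_conn H x y) ->
  (forall y1 y2, y1 \in Yrep -> y2 \in Yrep -> H_conn H y1 y2 -> y1 = y2) ->
  let T := invariants e alpha (fun _ => True) H in
  let R := invariants e alpha (fun _ => True) [set: gd_mor G] in
  let Ty y := invariants e alpha (in_ideal (e (gd_id y))) (isotropy H y) in
  let Ry y := invariants e alpha (in_ideal (e (gd_id y))) (isotropy [set: gd_mor G] y) in
  separable_ext R T 1 <->
  (forall y, y \in Yrep -> separable_ext (Ry y) (Ty y) (e (gd_id y))).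
Proof.
move=> _ hupa hG _ hW hY1 hY2 T R Ty Ry.
exact: (main hupa hG hW hY1 hY2).
Qed.
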